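(* For all integers $r \geq 3$ and $k \geq \max\{r-1,4\}$, we have $N(k,r) \geq (2r-4)k$.
   Context: A $k$-power is a word of the form $u^k$ (concatenation of $k$ copies of $u$) with $u$ nonempty. An $r$-antipower is a word $u_1 \cdots u_r$ with $|u_1| = \cdots = |u_r|$ and $u_1,\dots,u_r$ pairwise distinct. $N(k,r)$ is the smallest integer $\ell$ such that every binary word (over $\{0,1\}$) of length $\ell$ contains either a $k$-power or an $r$-antipower as a factor (contiguous subword). *)

(* Defs.v *)
From mathcomp Require Import all_boot.
Set Implicit Arguments. Unset Strict Implicit. Unset Printing Implicit Defensive.

(* Binary words are sequences of booleans (false = 0, true = 1). *)

Definition factor (w v : seq bool) : bool := infix w v.

Definition is_kpower (k : nat) (w : seq bool) : Prop :=
  exists u : seq bool, u != [::] /\ w = flatten (nseq k u).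

Definition is_antipower (r : nat) (w : seq bool) : Prop :=
  exists us : seq (seq bool),
    [/\ size us = r, w = flatten us,
        (forall u, u \in us -> size u = size (head [::] us)) & uniq us].

(* Every binary word of length l contains a k-power or an r-antipower
   as a factor. N(k,r) is the least l with this property. *)
Definition forces (k r l : nat) : Prop :=
  forall w : seq bool, size w = l ->
    exists v, factor v w /\ (is_kpower k v \/ is_antipower r v).

Definition N_ge (k r m : nat) : Prop := forall l, forces k r l -> m <= l.

(* Main.v *)
Require Import Defs.
From mathcomp Require Import all_boot zify.
Set Implicit Arguments. Unset Strict Implicit. Unset Printing Implicit Defensive.

Lemma modS_small x d : 0 < d ->
  x.+1 %% d = if (x %% d).+1 == d then 0 else (x %% d).+1.
Proof.
move=> d0; rewrite -addn1 -modnDml addn1.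
case: eqP => [->|ne]; first by rewrite modnn.
rewrite modn_small //; have := ltn_pmod x d0; lia.
Qed.

Lemma mod_lt2 a d : a < d + d -> a %% d = if a < d then a else a - d.
Proof.
move=> ad; case: (ltnP a d) => [/modn_small //|le].
rewrite -{1}(subnK le) modnDr modn_small //; lia.
Qed.

Definition fw (k i : nat) : bool :=
  odd (i %% (2 * k)) && ((i %% (2 * k)).+1 < 2 * k).

Lemma fw_no11 k x : 0 < k -> ~~ (fw k x && fw k x.+1).
Proof.
move=> k0; rewrite /fw modS_small; last lia.
have := ltn_pmod x (_ : 0 < 2 * k); move=> /(_ ltac:(lia)).
case: eqP => [_|ne] /=; first by rewrite andbF.
by case: (odd _); rewrite ?andbF.
Qed.

Lemma fw_00 k x : 0 < k -> ~~ fw k x -> ~~ fw k x.+1 ->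
  x %% (2 * k) = (2 * k).-2 \/ x %% (2 * k) = (2 * k).-1.
Proof.
move=> k0; rewrite /fw modS_small; last lia.
have := ltn_pmod x (_ : 0 < 2 * k); move=> /(_ ltac:(lia)).
set c := x %% (2 * k).
case: eqP => [E|ne] /= lt; first (right; lia).
case oc: (odd c) => /=.
  have -> : c.+1 < 2 * k by lia.
  by [].
rewrite -leqNgt => _ H; left; lia.
Qed.

Lemma fw_res k x c : x %% (2 * k) = c -> fw k x = odd c && (c.+1 < 2 * k).
Proof. by rewrite /fw => ->. Qed.

Lemma fw_window k s : 0 < k -> exists x,
  [/\ s <= x, x.+2 <= s + 2 * k, ~~ fw k x & ~~ fw k x.+1].
Proof.
move=> k0.
have lt := ltn_pmod s (_ : 0 < 2 * k); move: lt => /(_ ltac:(lia)) lt.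
case E: ((s %% (2 * k)).+1 == 2 * k).
  exists s; split => //; first lia.
    by rewrite (fw_res (erefl _)) (eqP E) ltnn andbF.
  by rewrite (fw_res (modS_small _ _)) ?E //; lia.
exists (s + ((2 * k).-2 - s %% (2 * k))); split; first lia.
- move/eqP: E; lia.
- have H : (s + ((2 * k).-2 - s %% (2 * k))) %% (2 * k) = (2 * k).-2.
    rewrite -modnDml modn_small; move/eqP: E; lia.
  rewrite (fw_res H); have -> : odd (2 * k).-2 = false.
    by rewrite -subn2 oddB ?odd_mul //; lia.
  by [].
- have H : (s + ((2 * k).-2 - s %% (2 * k))).+1 %% (2 * k) = (2 * k).-1.
    rewrite -addnS -modnDml modn_small; move/eqP: E; lia.
  rewrite (fw_res H); have -> : ((2 * k).-1.+1 < 2 * k) = false by apply/negbTE; lia.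
  by rewrite andbF.
Qed.

Lemma fw_three k x m : 0 < k -> 0 < m -> m + 3 <= 2 * k ->
  (forall j, j <= 2 -> ~~ fw k (x + j * m) /\ ~~ fw k (x + j * m).+1) -> False.
Proof.
move=> k0 m0 mk H.
have h0 := H 0 isT; have h1 := H 1 isT; have h2 := H 2 isT.
move: h0 h1 h2; rewrite mul0n mul1n addn0.
move=> [/fw_00 A /A] /(_ k0) {A} H0 [/fw_00 A /A] /(_ k0) {A} H1
          [/fw_00 A /A] /(_ k0) {A} H2.
move: H1 H2; rewrite -(modnDml x m) -(modnDml x (2 * m)).
have lt := ltn_pmod x (_ : 0 < 2 * k); move: lt => /(_ ltac:(lia)) lt.
rewrite (mod_lt2 (a := x %% (2 * k) + m)); last lia.
have [E|m2] : m = 1 \/ 2 <= m by lia.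
  subst m; rewrite (mod_lt2 (a := x %% (2 * k) + 2 * 1)); last lia.
  case: (ltnP (x %% (2 * k) + 1) (2 * k)) => ?; case: (ltnP (x %% (2 * k) + 2 * 1) (2 * k)) => ?; lia.
case: (ltnP (x %% (2 * k) + m) (2 * k)) => ?; lia.
Qed.

Lemma fw_mid k x a m : 0 < k -> ~~ fw k x -> ~~ fw k x.+1 -> a <= x ->
  x.+2 <= a + m -> m <= 2 * k ->
  x < (a + m) %/ (2 * k) * (2 * k) /\ (a + m) %/ (2 * k) * (2 * k) <= x.+2.
Proof.
move=> k0 f0 f1 ax xm mk.
have d0 : 0 < 2 * k by lia.
pose t := if x %% (2 * k) == (2 * k).-1 then x else x.+1.
have tm : t %% (2 * k) = (2 * k).-1.
  rewrite /t; case: eqP => // ne.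
  rewrite modS_small //; have [E|E] := fw_00 k0 f0 f1; rewrite E.
    have -> : (2 * k).-2.+1 == 2 * k = false by lia.
    lia.
  by exfalso; apply: ne.
have tx1 : x <= t by rewrite /t; case: eqP => _; lia.
have tx2 : t <= x.+1 by rewrite /t; case: eqP => _; lia.
have t1 : t.+1 %% (2 * k) = 0 by rewrite modS_small // tm; have -> : (2 * k).-1.+1 == 2 * k by lia.
have tq : t.+1 = t.+1 %/ (2 * k) * (2 * k) by rewrite {1}(divn_eq t.+1 (2 * k)) t1 addn0.
move: (t.+1 %/ (2 * k)) tq => Q tq.
have -> : a + m = Q * (2 * k) + (a + m - t.+1) by lia.
rewrite divnMDl // divn_small ?addn0; lia.
Qed.

Lemma factor_mkseq (g : nat -> bool) l v : infix v (mkseq g l) ->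
  exists s, s + size v <= l /\ forall p, p < size v -> nth false v p = g (s + p).
Proof.
move=> /infixP [s1 [s2 E]].
have sz : size s1 + size v + size s2 = l by rewrite -(size_mkseq g l) E !size_cat addnA.
exists (size s1); split; first lia.
move=> p pv; rewrite -(nth_mkseq false g (_ : size s1 + p < l)); last lia.
by rewrite E nth_cat ltnNge leq_addr /= addKn nth_cat pv.
Qed.

Lemma nth_flatten_nseq (u : seq bool) k i : i < k * size u ->
  nth false (flatten (nseq k u)) i = nth false u (i %% size u).
Proof.
elim: k i => [|k IH] i; first by rewrite mul0n.
move=> H /=; rewrite nth_cat.
case: ltnP => iu; first by rewrite modn_small.
rewrite IH; last by move: H; rewrite mulSn; lia.
by rewrite -{2}(subnK iu) modnDr.
Qed.

Lemma size_flatten_const (us : seq (seq bool)) m :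
  (forall u, u \in us -> size u = m) -> size (flatten us) = size us * m.
Proof.
elim: us => [|u us IH] H //=.
rewrite size_cat IH; last by move=> w wi; apply: H; rewrite inE wi orbT.
by rewrite H ?mem_head // mulSn.
Qed.

Lemma nth_flatten_const (us : seq (seq bool)) m i j :
  (forall u, u \in us -> size u = m) -> i < size us -> j < m ->
  nth false (flatten us) (i * m + j) = nth false (nth [::] us i) j.
Proof.
elim: us i => [|u us IH] i H //= iu jm.
rewrite nth_cat H ?mem_head //.
case: i iu => [|i] iu /=; first by rewrite mul0n add0n jm.
rewrite mulSn -addnA ltnNge leq_addr /= addKn IH //.
by move=> w wi; apply: H; rewrite inE wi orbT.
Qed.

Lemma fw_alt k b m : 0 < k ->
  (forall j, j.+1 < m -> ~~ (~~ fw k (b + j) && ~~ fw k (b + j).+1)) ->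
  forall j, j < m -> fw k (b + j) = fw k b (+) odd j.
Proof.
move=> k0 H; elim=> [|j IH] jm; first by rewrite addn0 addbF.
have := H j jm; have := fw_no11 (b + j) k0.
rewrite IH ?(ltnW jm) // addnS /=.
by case: (fw k b); case: (odd j); case: (fw k (b + j).+1).
Qed.

Lemma no_kpower k r l v s : 3 <= r -> r.-1 <= k -> 4 <= k -> l < (2 * r - 4) * k ->
  s + size v <= l -> (forall p, p < size v -> nth false v p = fw k (s + p)) ->
  ~ is_kpower k v.
Proof.
move=> r3 rk k4 lt sl nv [u [u0 ev]].
have k0 : 0 < k by lia.
set m := size u.
have m0 : 0 < m by rewrite lt0n size_eq0.
have sv : size v = k * m.
  rewrite ev (size_flatten_const (m := m)); first by rewrite size_nseq.
  by move=> w /nseqP [-> _].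
have per : forall i, i < k * m -> nth false v i = nth false u (i %% m).
  by move=> i ik; rewrite ev nth_flatten_nseq.
have mb : m + 3 <= 2 * k.
  have : k * m < (2 * k - 2) * k.
    apply: (leq_trans (_ : k * m < l.+1)); first lia.
    apply: (leq_trans lt); rewrite leq_mul2r; lia.
  rewrite [k * m]mulnC ltn_mul2r; lia.
have [p [p1 vp vp1]] : exists p, [/\ p.+1 < k * m, nth false v p = false & nth false v p.+1 = false].
  have [m1|m2] : m = 1 \/ 2 <= m by lia.
    exists 0; rewrite !nv ?sv ?m1 ?muln1; try lia.
    have e : fw k (s + 0) = fw k (s + 1).
      rewrite -!nv ?sv ?m1 ?muln1; try lia.
      by rewrite !per ?m1 ?muln1 ?modn1 //; lia.
    have := fw_no11 (s + 0) k0; rewrite -addnS -e.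
    by case: (fw k (s + 0)) => // _; split => //; lia.
  have [x [sx xs f0 f1]] := fw_window s k0.
  exists (x - s); rewrite !nv ?sv; try nia.
  split; first nia.
    by rewrite subnKC //; apply/negbTE.
  by rewrite addnS subnKC //; apply/negbTE.
apply: (fw_three (x := s + p %% m) k0 m0 mb) => j j2.
have pm := ltn_pmod p m0.
split.
  rewrite -addnA -nv ?sv; last nia.
  by rewrite per ?modnMDl ?modn_mod 1?addnC ?modnMDl ?modn_mod -?per ?vp //; nia.
rewrite -addnA -addnS -nv ?sv; last nia.
rewrite per; last nia.
rewrite -addn1 -addnA addnC -addnA modnMDl addnC modnDml addn1 -per ?vp1 //.
Qed.

Lemma no_antipower k r l v s : 3 <= r -> 0 < k -> l < (2 * r - 4) * k ->
  s + size v <= l -> (forall p, p < size v -> nth false v p = fw k (s + p)) ->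
  ~ is_antipower r v.
Proof.
move=> r3 k0 lt sl nv [us [sz ev hs uq]].
set m := size (head [::] us) in hs.
have sv : size v = r * m by rewrite ev (size_flatten_const hs) sz.
have mk : m <= 2 * k.
  have : r * m < r * (2 * k) by apply: (leq_trans (_ : r * m < l.+1)); nia.
  rewrite ltn_mul2l; lia.
have blk : forall i j, i < r -> j < m ->
    nth false (nth [::] us i) j = fw k (s + (i * m + j)).
  move=> i j ir jm; rewrite -(nth_flatten_const hs) ?sz // -ev nv // sv; nia.
pose a (i : 'I_r) := s + i * m.
pose c (i : 'I_r) := [exists j : 'I_m, (j.+1 < m) && ~~ fw k (a i + j) && ~~ fw k (a i + j).+1].
have alt : forall i, ~~ c i -> forall j, j < m -> fw k (a i + j) = fw k (a i) (+) odd j.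
  move=> i /existsPn ci; apply: fw_alt => // j jm.
  by have := ci (Ordinal (ltnW jm)); rewrite /= jm -andbA.
have eqB : forall i i' : 'I_r, ~~ c i -> ~~ c i' -> fw k (a i) = fw k (a i') -> i = i'.
  move=> i i' ci ci' e.
  have E : nth [::] us i = nth [::] us i'.
    apply: (@eq_from_nth _ false).
      by rewrite !hs // mem_nth // sz.
    move=> j; rewrite hs ?mem_nth ?sz // => jm.
    by rewrite !blk // !addnA -/(a i) -/(a i') !alt // e.
  apply/val_inj; apply/eqP; rewrite -(nth_uniq [::] _ _ uq) ?sz ?E //.
  exact: ltn_ord. exact: ltn_ord.
pose S := [set i | c i].
pose h (i : 'I_r) := (a i + m) %/ (2 * k).
have mid : forall i, c i -> exists x, [/\ a i <= x, x.+2 <= a i + m,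
    x < h i * (2 * k) & h i * (2 * k) <= x.+2].
  move=> i /existsP [j /andP [/andP [jm f0] f1]].
  have xm : (a i + j).+2 <= a i + m by rewrite -!addnS leq_add2l.
  have [H1 H2] := fw_mid k0 f0 f1 (leq_addr _ _) xm mk.
  by exists (a i + j); split => //; apply: leq_addr.
have hlt : forall i i' : 'I_r, c i -> c i' -> i < i' -> h i < h i'.
  move=> i i' ci ci' ii.
  have [x [ax xa hx1 hx2]] := mid i ci; have [x' [ax' xa' hx1' hx2']] := mid i' ci'.
  have : a i + m <= a i' by rewrite /a -addnA leq_add2l; have := ii; nia.
  rewrite -(ltn_pmul2r (_ : 0 < 2 * k)); lia.
have cS : #|S| <= r - 3.
  have -> : r - 3 = size (iota 1 (r - 3)) by rewrite size_iota.
  rewrite cardE -(size_map h); apply: uniq_leq_size.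
    rewrite map_inj_in_uniq ?enum_uniq // => i i'.
    rewrite !mem_enum !inE => ci ci' e.
    case: (ltngtP i i') => ii; last exact/val_inj.
      by move: (hlt _ _ ci ci' ii); rewrite e ltnn.
    by move: (hlt _ _ ci' ci ii); rewrite e ltnn.
  move=> y /mapP [i]; rewrite mem_enum inE => ci ->.
  have [x [ax xa hx1 hx2]] := mid i ci.
  rewrite mem_iota; apply/andP; split.
    by rewrite lt0n; apply/negP => /eqP h0; move: hx1; rewrite h0.
  have ia : a i + m <= l by rewrite /a; have := ltn_ord i; nia.
  have -> : 1 + (r - 3) = r - 2 by lia.
  rewrite -(ltn_pmul2r (_ : 0 < 2 * k)); last lia.
  have : (2 * r - 4) * k = (r - 2) * (2 * k) by nia.
  lia.
pose A0 := [set i | ~~ c i && ~~ fw k (a i)].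
pose A1 := [set i | ~~ c i && fw k (a i)].
have c0 : #|A0| <= 1.
  apply/card_le1_eqP => i i'; rewrite !inE => /andP [ci fi] /andP [ci' fi'].
  by apply: esym; apply: eqB => //; move/negbTE: fi => ->; move/negbTE: fi' => ->.
have c1 : #|A1| <= 1.
  apply/card_le1_eqP => i i'; rewrite !inE => /andP [ci fi] /andP [ci' fi'].
  by apply: esym; apply: eqB => //; rewrite fi fi'.
have sub : [set: 'I_r] \subset S :|: (A0 :|: A1).
  apply/subsetP => i _; rewrite !inE.
  by case: (c i); case: (fw k (a i)).
have := subset_leq_card sub; rewrite cardsT card_ord.
have u1 : #|S :|: (A0 :|: A1)| <= #|S| + #|A0 :|: A1| by rewrite cardsU leq_subr.
have u2 : #|A0 :|: A1| <= #|A0| + #|A1| by rewrite cardsU leq_subr.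
move=> H; have := leq_trans H (leq_trans u1 (leq_add cS (leq_trans u2 (leq_add c0 c1)))); lia.
Qed.

Theorem corollary2 (k r : nat) :
  3 <= r -> maxn r.-1 4 <= k -> N_ge k r ((2 * r - 4) * k).
Proof.
move=> r3; rewrite geq_max => /andP [rk k4] l Hl.
rewrite leqNgt; apply/negP => lt.
have [v [fv Hv]] := Hl (mkseq (fw k) l) (size_mkseq _ _).
have [s [sl nv]] := factor_mkseq fv.
case: Hv => H.
  exact: (no_kpower r3 rk k4 lt sl nv H).
have k0 : 0 < k by lia.
exact: (no_antipower r3 k0 lt sl nv H).
Qed.
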